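(* Let $G$ be an almost well-covered graph. Then $G_2$ is a complete graph (equivalently, the vertices of type $2$ are pairwise adjacent).
   Context: All graphs are finite and simple. For a graph $G$, $\alpha(G)$ is the maximum size of an independent set and $i(G)$ the minimum size of an inclusion-maximal independent set; $G$ is almost well-covered if $\alpha(G)-i(G)=1$. Types of vertices: let $U$ be the set of vertices of $G$ whose connected component is a complete graph. In $G-U$, vertices of degree $1$ are leaves and the others are internal vertices. An internal vertex adjacent to exactly $k$ leaves is of type $k$; every vertex of $U$ is of type $0$. $G_2$ denotes the subgraph of $G$ induced by all vertices of type $2$ (the null graph counts as complete). *)

(* Defs.v *)
From mathcomp Require Import all_boot.
Set Implicit Arguments. Unset Strict Implicit. Unset Printing Implicit Defensive.

Definition simple_graph (T : finType) (e : rel T) : Prop :=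
  symmetric e /\ irreflexive e.

Section Graph.
Variables (T : finType) (e : rel T).

Definition independent (A : {set T}) : bool :=
  [forall x in A, forall y in A, ~~ e x y].

Definition maximal_independent (A : {set T}) : bool :=
  independent A && [forall x, (x \notin A) ==> ~~ independent (x |: A)].

Definition alpha : nat := \max_(A : {set T} | independent A) #|A|.

(* i(G): minimum size of a maximal independent set (all such sizes are <= #|T|) *)
Definition imin : nat := \big[minn/#|T|]_(A : {set T} | maximal_independent A) #|A|.

Definition almost_well_covered : Prop := (alpha - imin = 1)%N.

Definition component (v : T) : {set T} := [set w | connect e v w].

Definition is_complete (A : {set T}) : bool :=
  [forall x in A, forall y in A, (x != y) ==> e x y].

Definition U : {set T} := [set v | is_complete (component v)].

Definition degGU (v : T) : nat := #|[set w | e v w & w \notin U]|.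

Definition leaf (v : T) : bool := (v \notin U) && (degGU v == 1%N).
Definition internal (v : T) : bool := (v \notin U) && (degGU v != 1%N).

Definition nleaves (v : T) : nat := #|[set w | e v w & leaf w]|.

Definition of_type (k : nat) (v : T) : bool :=
  (internal v && (nleaves v == k)) || ((v \in U) && (k == 0%N)).

Definition G_type_complete (k : nat) : Prop :=
  forall x y, of_type k x -> of_type k y -> x != y -> e x y.

End Graph.

(* Main.v *)
Require Import Defs.
From mathcomp Require Import all_boot zify.
Set Implicit Arguments. Unset Strict Implicit. Unset Printing Implicit Defensive.

Lemma bigmin_le (I : finType) (P : pred I) (F : I -> nat) m j :
  P j -> \big[minn/m]_(i | P i) F i <= F j.
Proof.
move=> Pj; rewrite -big_filter.
have : j \in [seq i <- index_enum I | P i] by rewrite mem_filter Pj mem_index_enum.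
rewrite /index_enum; elim: [seq i <- _ | P i] => //= a r IH.
rewrite big_cons inE /=; case/orP=> [/eqP->|/IH H]; first exact: geq_minl.
exact: leq_trans (geq_minr _ _) H.
Qed.

Section S.
Variables (T : finType) (e : rel T).
Hypothesis sg : simple_graph e.

Lemma indepP (A : {set T}) :
  reflect (forall x y, x \in A -> y \in A -> ~~ e x y) (independent e A).
Proof.
apply: (iffP forallP) => [H x y xA yA | H x].
  by move: (H x); rewrite xA => /forall_inP; apply.
by apply/implyP=> xA; apply/forall_inP=> y yA; apply: H.
Qed.

Lemma nbr_U w u : e w u -> u \in U e -> w \in U e.
Proof.
case: sg => sym irr => ewu.
have cs : connect_sym e by apply: sym_connect_sym.
have cwu : connect e w u by apply: connect1.
rewrite /U !inE.
have -> : component e w = component e u.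
  apply/setP=> z; rewrite !inE; apply/idP/idP => H.
    by apply: connect_trans H; rewrite cs.
  exact: connect_trans H.
by [].
Qed.

Lemma leaf_nbr p q r : leaf e p -> e p q -> e p r -> r \notin U e -> q = r.
Proof.
move=> /andP[pU /eqP d] epq epr rU.
have qU : q \notin U e by apply/negP=> /(nbr_U epq); apply/negP.
have /card_le1_eqP H : #|[set w | e p w & w \notin U e]| <= 1 by rewrite -/(degGU e p) d.
by apply: H; rewrite inE ?epq ?epr.
Qed.

Lemma extend (A : {set T}) : independent e A ->
  exists2 S, maximal_independent e S & A \subset S.
Proof.
move=> iA.
have PA : independent e A && (A \subset A) by rewrite iA subxx.
case: (@arg_maxnP _ A (fun B => independent e B && (A \subset B)) (fun B : {set T} => #|B|) PA) => S /andP[iS AS] Smax.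
exists S => //; rewrite /maximal_independent iS /=.
apply/forallP=> z; apply/implyP=> zS; apply/negP=> iz.
have := Smax (z |: S); rewrite iz (subset_trans AS (subsetUr _ _)) => /(_ isT).
rewrite cardsU1 zS /=; lia.
Qed.

Lemma leaf_parent p z q : leaf e p -> e z p -> z \notin U e -> e p q -> q = z.
Proof.
case: sg => sym _ lp ezp zU epq; apply: (leaf_nbr lp epq _ zU).
by rewrite sym.
Qed.

Lemma not_leaf_internal z : internal e z -> ~~ leaf e z.
Proof. by case/andP=> _ d; rewrite /leaf negb_and d orbT. Qed.
End S.

Theorem lemma7 (T : finType) (e : rel T) :
  simple_graph e -> almost_well_covered e -> G_type_complete e 2.
Proof.
move=> sg awc x y tx ty nxy; apply/negPn/negP => exy.
case: (sg) => sym irr.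
move: tx => /orP[/andP[ix /eqP lx] | /andP[_ //]].
move: ty => /orP[/andP[iy /eqP ly] | /andP[_ //]].
have xU : x \notin U e by case/andP: ix.
have yU : y \notin U e by case/andP: iy.
have ixy : independent e [set x; y].
  apply/indepP => p q; rewrite !inE => /orP[]/eqP-> /orP[]/eqP->;
  by rewrite ?irr // sym.
case: (extend ixy) => S mS xyS.
have iS : independent e S by case/andP: mS.
have xS : x \in S by apply: (subsetP xyS); rewrite !inE eqxx.
have yS : y \in S by apply: (subsetP xyS); rewrite !inE eqxx orbT.
pose Lx := [set w | e x w & leaf e w].
pose Ly := [set w | e y w & leaf e w].
pose L := Lx :|: Ly.
pose S' := (S :\ x :\ y) :|: L.
have Lpar : forall p, p \in L -> leaf e p /\
     (forall q, e p q -> q = x \/ q = y).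
  move=> p; rewrite !inE => /orP[]/andP[ep lp]; split=> // q epq.
    by left; apply: (leaf_parent sg lp ep xU epq).
  by right; apply: (leaf_parent sg lp ep yU epq).
have C : forall p q, p \in L -> q \in S' -> ~~ e p q.
  move=> p q pL qS'; apply/negP=> epq.
  case: (Lpar p pL) => _ /(_ q epq) qxy.
  move: qS'; rewrite inE => /orP[|qL].
    by rewrite !inE; case: qxy => ->; rewrite eqxx ?andbF.
  case: (Lpar q qL) => lq _.
  by case: qxy => E; move: lq; rewrite E; apply/negP; apply: not_leaf_internal.
have iS' : independent e S'.
  apply/indepP => p q pS' qS'.
  case pL: (p \in L); first exact: C.
  case qL: (q \in L); first by rewrite sym; apply: C.
  move: pS' qS'; rewrite inE pL orbF => /setD1P[_ /setD1P[_ pS]].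
  rewrite inE qL orbF => /setD1P[_ /setD1P[_ qS]].
  by move/indepP: iS; apply.
have LS : forall p, p \in L -> p \notin S.
  move=> p; rewrite !inE => /orP[]/andP[ep _]; apply/negP => pS.
    by move/indepP: iS => /(_ _ _ xS pS); rewrite ep.
  by move/indepP: iS => /(_ _ _ yS pS); rewrite ep.
have cL : #|L| = 4.
  rewrite cardsU.
  have -> : Lx :&: Ly = set0.
    apply/setP=> p; rewrite !inE; apply/negP => /andP[/andP[ep lp] /andP[ep' _]].
    have := leaf_parent sg lp ep xU; move/(_ y); rewrite sym ep' => /(_ isT) E.
    by rewrite E eqxx in nxy.
  by rewrite cards0 -/(nleaves e x) -/(nleaves e y) lx ly.
have cS : #|S| = #|S :\ x :\ y| + 2.
  rewrite (cardsD1 x S) xS (cardsD1 y (S :\ x)) !inE eq_sym nxy yS /=; lia.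
have cS' : #|S'| = #|S :\ x :\ y| + 4.
  rewrite cardsU cL.
  have -> : (S :\ x :\ y) :&: L = set0.
    apply/setP=> p; rewrite !inE; apply/negP => /andP[/andP[_ /andP[_ pS]] pL].
    by move: (LS p); rewrite !inE pL pS => /(_ isT).
  by rewrite cards0 subn0.
have h1 : #|S'| <= alpha e.
  by apply: (@leq_bigmax_cond _ (fun A => independent e A) (fun A => #|A|)).
have h2 : imin e <= #|S|.
  by rewrite /imin; apply: (@bigmin_le _ (fun A => maximal_independent e A) (fun A => #|A|)).
move: awc; rewrite /almost_well_covered; lia.
Qed.
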